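(* Let $\Psi$ be a finite (possibly empty) composition of the substitutions $U$ and $V$. (i) If $\Psi(ab)=a^{e_1}ba^{e_2}b\cdots a^{e_n}b$ with integers $e_i\ge1$, then for every $i\in\{2,\dots,n\}$, in the lexicographic order, $(e_1,e_2,\dots,e_n,\infty)>(e_i,e_{i+1},\dots,e_n,\infty)$ and $(e_n,e_{n-1},\dots,e_1,\infty)<(e_{n-i+1},e_{n-i},\dots,e_1,\infty)$. (ii) If $\Psi(ab)=ab^{e_1}ab^{e_2}\cdots ab^{e_n}$ with integers $e_i\ge1$, then for every $i\in\{2,\dots,n\}$, in the lexicographic order, $(e_1,e_2,\dots,e_n,1,1,\dots)<(e_i,e_{i+1},\dots,e_n,1,1,\dots)$ and $(e_n,e_{n-1},\dots,e_1,1,1,\dots)>(e_{n-i+1},e_{n-i},\dots,e_1,1,1,\dots)$.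
   Context: Words are finite words in the letters $a,b$. The Nielsen moves are the substitutions $U:a\mapsto ab,\ b\mapsto b$ and $V:a\mapsto a,\ b\mapsto ab$, applied letterwise. Sequences are compared lexicographically, with $\infty$ regarded as larger than every integer; in (ii) the sequences are extended by infinitely many $1$'s. *)

(* Defs.v *)
From HB Require Import structures.
From mathcomp Require Import all_boot.
Set Implicit Arguments. Unset Strict Implicit. Unset Printing Implicit Defensive.

Inductive letter := La | Lb.

Definition letter_to_bool (x : letter) : bool := if x is La then true else false.
Definition bool_to_letter (x : bool) : letter := if x then La else Lb.
Lemma letter_boolK : cancel letter_to_bool bool_to_letter.
Proof. by case. Qed.
HB.instance Definition _ := Equality.copy letter (can_type letter_boolK).

Definition word := seq letter.

Inductive move := MU | MV.

Definition img (m : move) (x : letter) : word :=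
  match m, x with
  | MU, La => [:: La; Lb]
  | MU, Lb => [:: Lb]
  | MV, La => [:: La]
  | MV, Lb => [:: La; Lb]
  end.

Definition apply_move (m : move) (w : word) : word := flatten (map (img m) w).

Definition psi (ms : seq move) (w : word) : word := foldr apply_move w ms.

Definition blockA (e : seq nat) : word := flatten [seq rcons (nseq x La) Lb | x <- e].
Definition blockB (e : seq nat) : word := flatten [seq La :: nseq x Lb | x <- e].

(* Extended naturals: None = infinity (larger than every integer). *)
Definition ltx (x y : option nat) : bool :=
  match x, y with
  | Some m, Some n => m < n
  | Some _, None => true
  | None, _ => false
  end.

Fixpoint lexlt (s t : seq (option nat)) : bool :=
  match s, t with
  | [::], [::] => false
  | [::], _ :: _ => true
  | _ :: _, [::] => false
  | x :: s', y :: t' => ltx x y || ((x == y) && lexlt s' t')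
  end.

Definition inf_ext (e : seq nat) : seq (option nat) := rcons (map Some e) None.

Definition pad1 (e : seq nat) : nat -> nat := fun k => nth 1 e k.

Definition lexlt_inf (f g : nat -> nat) : Prop :=
  exists k, (forall j, j < k -> f j = g j) /\ f k < g k.

(* Main.v *)
Require Import Defs.
From mathcomp Require Import all_boot.
From mathcomp Require Import zify.

Fixpoint wlt (u v : word) : bool :=
  match u, v with
  | [::], [::] => false
  | [::], _ :: _ => true
  | _ :: _, [::] => false
  | x :: u', y :: v' =>
      match x, y with
      | La, Lb => true
      | Lb, La => false
      | _, _ => wlt u' v'
      end
  end.

Lemma wlt_cat p u v : wlt (p ++ u) (p ++ v) = wlt u v.
Proof. by elim: p => [|c p IH] //=; case: c. Qed.

Lemma am_cons m c w : apply_move m (c :: w) = img m c ++ apply_move m w.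
Proof. by []. Qed.

Lemma am_nil m : apply_move m [::] = [::].
Proof. by []. Qed.

Lemma wlt_am m u v : wlt u v -> wlt (apply_move m u) (apply_move m v).
Proof.
elim: u v => [|x u IH] [|y v] //=.
  by rewrite am_cons; case: m; case: y.
rewrite !am_cons; case: x; case: y => //=.
- by rewrite wlt_cat; apply: IH.
- move=> _; clear IH; case: m => //=.
  case: u => [|c u] //=; rewrite am_cons; by case: c.
- by rewrite wlt_cat; apply: IH.
Qed.

Definition lyndon (w : word) := forall i, 0 < i < size w -> wlt w (drop i w).

Lemma img_shape m c : img m c = [:: La; Lb] \/ exists y, img m c = [:: y].
Proof. by case: m; case: c; [left|right; eexists|right; eexists|left]. Qed.

Lemma drop_am m x i : 0 < i < size (apply_move m x) ->
  (exists j, 0 < j < size x /\ drop i (apply_move m x) = apply_move m (drop j x))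
  \/ exists s, drop i (apply_move m x) = Lb :: s.
Proof.
elim: x i => [|c x IH] i; first by rewrite am_nil => /andP [] /ltn_trans H /H.
rewrite am_cons size_cat drop_cat => /andP [Hi0 Hi].
have Hx : forall k, k < size (apply_move m x) -> 0 < size x.
  by move=> k; case: (x) => //=.
case: (img_shape m c) => [E|[y E]]; rewrite E /=.
- case: (ltnP i 2) => Hi2.
    right; have -> : i = 1 by lia. by exists (apply_move m x).
  case: (ltngtP i 2) => Hi3; [lia| |].
    have H : 0 < i - 2 < size (apply_move m x).
      apply/andP; split; first lia. rewrite E /= in Hi; lia.
    have [[j [/andP [Hj1 Hj2] Hd]]|] := IH _ H; last by right.
    left; exists j.+1; split; [apply/andP; split; lia | exact Hd].
  subst i; left; exists 1; rewrite subnn drop0; split; last by rewrite /= drop0.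
  rewrite E /= in Hi. have := Hx 0; lia.
- case: (ltnP i 1) => Hi2; first lia.
  case: (ltngtP i 1) => Hi3; [lia| |].
    have H : 0 < i - 1 < size (apply_move m x).
      apply/andP; split; first lia. rewrite E /= in Hi; lia.
    have [[j [/andP [Hj1 Hj2] Hd]]|] := IH _ H; last by right.
    left; exists j.+1; split; [apply/andP; split; lia | exact Hd].
  subst i; left; exists 1; rewrite subnn drop0; split; last by rewrite /= drop0.
  rewrite E /= in Hi. have := Hx 0; lia.
Qed.

Lemma psi_lyndon ms : (exists t, psi ms [:: La; Lb] = La :: t) /\ lyndon (psi ms [:: La; Lb]).
Proof.
elim: ms => [|m ms [[t Ht] Hl]].
  split; first by exists [:: Lb].
  by move=> [|[|i]] //=.
rewrite /= -/(psi ms _) Ht; split.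
  by rewrite am_cons; case: m; eexists.
move=> i Hi; have [[j [Hj ->]]|[s ->]] := drop_am _ _ _ Hi.
  apply: wlt_am; rewrite -Ht; apply: Hl; by rewrite Ht.
rewrite am_cons; by case: m {Hi}.
Qed.

Definition sw (c : letter) := if c is La then Lb else La.
Definition swm (m : move) := if m is MU then MV else MU.

Lemma am_cat m u v : apply_move m (u ++ v) = apply_move m u ++ apply_move m v.
Proof. by rewrite /apply_move map_cat flatten_cat. Qed.

Lemma swrev_am m w :
  map sw (rev (apply_move m w)) = apply_move (swm m) (map sw (rev w)).
Proof.
elim: w => [|c w IH] //.
rewrite am_cons rev_cat map_cat IH rev_cons map_rcons -cats1 am_cat.
by congr (_ ++ _); clear IH; case: m; case: c.
Qed.

Lemma swrev_psi ms :
  map sw (rev (psi ms [:: La; Lb])) = psi (map swm ms) [:: La; Lb].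
Proof. by elim: ms => [|m ms IH] //=; rewrite swrev_am IH. Qed.

Lemma blockA_cons x e : blockA (x :: e) = nseq x La ++ Lb :: blockA e.
Proof. by rewrite /blockA /= cat_rcons. Qed.
Lemma blockB_cons x e : blockB (x :: e) = La :: nseq x Lb ++ blockB e.
Proof. by []. Qed.
Lemma blockA_cat e f : blockA (e ++ f) = blockA e ++ blockA f.
Proof. by rewrite /blockA map_cat flatten_cat. Qed.
Lemma blockB_cat e f : blockB (e ++ f) = blockB e ++ blockB f.
Proof. by rewrite /blockB map_cat flatten_cat. Qed.

Lemma map_nseq' (T U : Type) (f : T -> U) n x : map f (nseq n x) = nseq n (f x).
Proof. exact: map_nseq. Qed.
Lemma rev_nseq' (T : Type) n (x : T) : rev (nseq n x) = nseq n x.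
Proof. exact: rev_nseq. Qed.

Lemma swrev_blockA e : map sw (rev (blockA e)) = blockB (rev e).
Proof.
elim: e => [|x e IH] //.
rewrite blockA_cons rev_cat map_cat rev_cons map_rcons IH rev_cons -!cats1 blockB_cat.
by rewrite rev_nseq' map_nseq' -catA; congr (_ ++ _); rewrite /blockB /= cats0.
Qed.

Lemma swrev_blockB e : map sw (rev (blockB e)) = blockA (rev e).
Proof.
elim: e => [|x e IH] //.
rewrite blockB_cons -cat1s catA rev_cat map_cat IH rev_cons -cats1 blockA_cat.
by rewrite rev_cat map_cat rev_nseq' map_nseq' blockA_cons.
Qed.

Lemma runA1 x x' r r' : x' < x -> wlt (nseq x La ++ r) (nseq x' La ++ Lb :: r').
Proof. by elim: x x' => [|x IH] [|x'] //= H; apply: IH. Qed.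
Lemma runA2 x x' r r' : x < x' -> wlt (nseq x La ++ Lb :: r) (nseq x' La ++ r') = false.
Proof. by elim: x x' => [|x IH] [|x'] //= H; apply: IH. Qed.
Lemma runB1 x x' r r' : x < x' -> wlt (nseq x Lb ++ La :: r) (nseq x' Lb ++ r').
Proof. by elim: x x' => [|x IH] [|x'] //= H; apply: IH. Qed.
Lemma runB2 x x' r r' : x' < x -> (forall s, r' <> Lb :: s) ->
  wlt (nseq x Lb ++ r) (nseq x' Lb ++ r') = false.
Proof.
elim: x x' => [|x IH] [|x'] //= H Hr; last by apply: IH.
by clear IH; case: r' Hr => [|[] s] // /(_ s).
Qed.

Lemma keyA h h' : wlt (blockA h) (blockA h') -> size h' < size h ->
  exists k, [/\ k < size h', take k h = take k h' & nth 0 h' k < nth 0 h k].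
Proof.
elim: h' h => [|x' t' IH] [|x t] //=; first by case: (blockA (x :: t)).
rewrite !blockA_cons => Hw Hs.
case: (ltngtP x x') => Hx.
- by rewrite runA2 in Hw.
- by exists 0.
- subst x'; rewrite wlt_cat /= in Hw.
  have [k [Hk Ht Hn]] := IH _ Hw Hs.
  by exists k.+1; rewrite /= Ht.
Qed.

Lemma keyB h h' : wlt (blockB h) (blockB h') -> size h' < size h ->
  exists k, [/\ k < size h', take k h = take k h' & nth 0 h k < nth 0 h' k].
Proof.
elim: h' h => [|x' t' IH] [|x t] //= Hw Hs.
change (is_true (wlt (nseq x Lb ++ blockB t) (nseq x' Lb ++ blockB t'))) in Hw.
case: (ltngtP x x') => Hx.
- by exists 0.
- rewrite runB2 // in Hw. by case: t' {IH Hs} => [|y u] s.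
- subst x'; rewrite wlt_cat in Hw.
  have [k [Hk Ht Hn]] := IH _ Hw Hs.
  by exists k.+1; rewrite /= Ht.
Qed.

Lemma lyn_drop (f : nat -> word) h j : (forall x, 0 < size (f x)) ->
  lyndon (flatten (map f h)) -> 0 < j < size h ->
  wlt (flatten (map f h)) (flatten (map f (drop j h))).
Proof.
move=> Hf Hl /andP [Hj Hjs].
have E : flatten (map f h) = flatten (map f (take j h)) ++ flatten (map f (drop j h)).
  by rewrite -flatten_cat -map_cat cat_take_drop.
have P1 : 0 < size (flatten (map f (take j h))).
  case: h Hjs {E Hl} => [|y h] //= _; case: j Hj => //= j _.
  by rewrite size_cat; have := Hf y; lia.
have P2 : 0 < size (flatten (map f (drop j h))).
  have : drop j h = nth 0 h j :: drop j.+1 h by rewrite (drop_nth 0).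
  by move=> ->; rewrite /= size_cat; have := Hf (nth 0 h j); lia.
have := Hl (size (flatten (map f (take j h)))).
rewrite {2 3}E drop_size_cat // -E; apply.
by rewrite P1 E size_cat; lia.
Qed.

Lemma lex_of_take k s t : k < size s -> k < size t -> take k s = take k t ->
  nth 0 s k < nth 0 t k -> lexlt (inf_ext s) (inf_ext t).
Proof.
elim: k s t => [|k IH] [|x s] [|y t] //=.
  by move=> _ _ _ ->.
move=> Hs Ht [-> Hst] Hn; apply/orP; right; rewrite eqxx /=.
exact: IH.
Qed.

Lemma pad_of_take k s t : k < size s -> k < size t -> take k s = take k t ->
  nth 0 s k < nth 0 t k -> lexlt_inf (pad1 s) (pad1 t).
Proof.
move=> Hs Ht Hst Hn; exists k; split.
  move=> j Hj; rewrite /pad1 -(nth_take 1 Hj) Hst nth_take //.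
by rewrite /pad1 (set_nth_default 0 1 Hs) (set_nth_default 0 1 Ht).
Qed.

Lemma lynA h j : lyndon (blockA h) -> 0 < j < size h ->
  exists k, [/\ k < size (drop j h), take k h = take k (drop j h)
           & nth 0 (drop j h) k < nth 0 h k].
Proof.
move=> Hl Hj; apply: keyA; first by apply: lyn_drop => // x; rewrite size_rcons.
by rewrite size_drop; lia.
Qed.

Lemma lynB h j : lyndon (blockB h) -> 0 < j < size h ->
  exists k, [/\ k < size (drop j h), take k h = take k (drop j h)
           & nth 0 h k < nth 0 (drop j h) k].
Proof.
move=> Hl Hj; apply: keyB; first by apply: lyn_drop.
by rewrite size_drop; lia.
Qed.

Theorem lemma4p6 (ms : seq move) :
  (forall e : seq nat, all (fun x => 0 < x) e ->
     psi ms [:: La; Lb] = blockA e ->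
     forall i, 2 <= i <= size e ->
       lexlt (inf_ext (drop i.-1 e)) (inf_ext e) /\
       lexlt (inf_ext (rev e)) (inf_ext (drop i.-1 (rev e)))) /\
  (forall e : seq nat, all (fun x => 0 < x) e ->
     psi ms [:: La; Lb] = blockB e ->
     forall i, 2 <= i <= size e ->
       lexlt_inf (pad1 e) (pad1 (drop i.-1 e)) /\
       lexlt_inf (pad1 (drop i.-1 (rev e))) (pad1 (rev e))).
Proof.
have [_ L1] := psi_lyndon ms.
have [_ L2] := psi_lyndon (map swm ms).
rewrite -swrev_psi in L2.
split=> e _ He i Hi; rewrite He in L1 L2.
- rewrite swrev_blockA in L2.
  have Hj : 0 < i.-1 < size e by lia.
  have Hj' : 0 < i.-1 < size (rev e) by rewrite size_rev.
  have [k [Hk Ht Hn]] := lynA _ _ L1 Hj.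
  have [k' [Hk' Ht' Hn']] := lynB _ _ L2 Hj'.
  split.
    apply: (lex_of_take k) => //; by [rewrite size_drop in Hk; lia | rewrite Ht | rewrite -Ht].
  apply: (lex_of_take k') => //; by [rewrite size_drop in Hk'; lia | rewrite Ht' | rewrite -Ht'].
- rewrite swrev_blockB in L2.
  have Hj : 0 < i.-1 < size e by lia.
  have Hj' : 0 < i.-1 < size (rev e) by rewrite size_rev.
  have [k [Hk Ht Hn]] := lynB _ _ L1 Hj.
  have [k' [Hk' Ht' Hn']] := lynA _ _ L2 Hj'.
  split.
    apply: (pad_of_take k) => //; by [rewrite size_drop in Hk; lia | rewrite Ht | rewrite -Ht].
  apply: (pad_of_take k') => //; by [rewrite size_drop in Hk'; lia | rewrite Ht' | rewrite -Ht'].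
Qed.
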